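(* Let $k$ be a field, $\mathsf{E}$ a locally finite $k$-linear category, $P$ a left $\mathsf{E}$-module, and $Q',Q''\subseteq P$ two big $\mathsf{E}$-submodules of $P$. Then $Q'\cap Q''$ is a big $\mathsf{E}$-submodule of $P$.
   Context: A small $k$-linear category $\mathsf{E}$ has $k$-vector spaces $\operatorname{Hom}_\mathsf{E}(x,y)$, $k$-bilinear associative composition and identities with $\mathrm{id}_x\ne0$. A left $\mathsf{E}$-module is a $k$-linear functor $\mathsf{E}\to k\text{-Vect}$. Write $x\preceq y$ if there are $n\ge1$ and objects $x=z_0,\dots,z_n=y$ with $\operatorname{Hom}_\mathsf{E}(z_{i-1},z_i)\neq0$ for all $i$. $\mathsf{E}$ is locally finite if all Hom spaces are finite-dimensional and every $\{z:x\preceq z\preceq y\}$ is finite. A left $\mathsf{E}$-module $T$ is contrafinite if for every object $y$ there is a finite set of objects $A$ such that the action map $\operatorname{Hom}_\mathsf{E}(x,y)\otimes_kT(x)\to T(y)$ vanishes for all $x\notin A$. A submodule $Q\subseteq P$ is big if $P/Q$ is contrafinite. *)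

(* Defs.v *)
From HB Require Import structures.
From mathcomp Require Import all_boot all_order all_algebra.
Set Implicit Arguments. Unset Strict Implicit. Unset Printing Implicit Defensive.
Import GRing.Theory.
Local Open Scope ring_scope.

Record kcat (k : fieldType) := KCat {
  Obj : Type;
  Hom : Obj -> Obj -> lmodType k;
  comp : forall x y z, Hom y z -> Hom x y -> Hom x z;
  idm : forall x, Hom x x;
  comp_linr : forall x y z (g : Hom y z) (a : k) (f f' : Hom x y),
      comp g (a *: f + f') = a *: comp g f + comp g f';
  comp_linl : forall x y z (f : Hom x y) (a : k) (g g' : Hom y z),
      comp (a *: g + g') f = a *: comp g f + comp g' f;
  comp_assoc : forall w x y z (h : Hom y z) (g : Hom x y) (f : Hom w x),
      comp h (comp g f) = comp (comp h g) f;
  comp_idl : forall x y (f : Hom x y), comp (idm y) f = f;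
  comp_idr : forall x y (f : Hom x y), comp f (idm x) = f;
  idm_neq0 : forall x, idm x != 0
}.
Arguments Hom {k} k0 _ _ : rename.

(* Propositional list membership (no eqType needed). *)
Fixpoint inP (T : Type) (z : T) (s : seq T) : Prop :=
  match s with [::] => False | a :: s' => a = z \/ inP z s' end.

Definition findim (k : fieldType) (V : lmodType k) : Prop :=
  exists s : seq V, forall v : V,
    exists c : 'I_(size s) -> k, v = \sum_(i < size s) c i *: s`_i.

(* x ⪯ y : a chain x = z0, ..., zn = y (n >= 1) with nonzero Hom(z_{i-1}, z_i). *)
Inductive prec (k : fieldType) (E : kcat k) : Obj E -> Obj E -> Prop :=
| prec1 (x y : Obj E) : (exists f : Hom E x y, f != 0) -> prec x y
| precS (x y z : Obj E) : (exists f : Hom E x y, f != 0) -> prec y z -> prec x z.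

Definition locally_finite (k : fieldType) (E : kcat k) : Prop :=
  (forall x y, findim (Hom E x y)) /\
  (forall x y, exists s : seq (Obj E),
      forall z, @prec k E x z -> @prec k E z y -> inP z s).

(* Left E-module = k-linear functor E -> k-Vect. *)
Record kmod (k : fieldType) (E : kcat k) := KMod {
  Mod : Obj E -> lmodType k;
  act : forall x y, Hom E x y -> Mod x -> Mod y;
  act_linr : forall x y (f : Hom E x y) (a : k) (v w : Mod x),
      act f (a *: v + w) = a *: act f v + act f w;
  act_linl : forall x y (v : Mod x) (a : k) (f g : Hom E x y),
      act (a *: f + g) v = a *: act f v + act g v;
  act_comp : forall x y z (g : Hom E y z) (f : Hom E x y) (v : Mod x),
      act (comp g f) v = act g (act f v);
  act_id : forall x (v : Mod x), act (idm x) v = v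
}.

(* Contrafinite: for each y, the action maps Hom(x,y) (x) T(x) -> T(y)
   vanish outside a finite set of objects x.  (The map on the tensor
   product vanishes iff it vanishes on all pure tensors f (x) v.) *)
Definition contrafinite (k : fieldType) (E : kcat k) (T : kmod E) : Prop :=
  forall y, exists A : seq (Obj E), forall x, ~ inP x A ->
    forall (f : Hom E x y) (v : Mod T x), act f v = 0.

Definition is_submodule (k : fieldType) (E : kcat k) (P : kmod E)
    (Q : forall x, Mod P x -> Prop) : Prop :=
  (forall x, Q x 0) /\
  (forall x (a : k) (v w : Mod P x), Q x v -> Q x w -> Q x (a *: v + w)) /\
  (forall x y (f : Hom E x y) (v : Mod P x), Q x v -> Q y (act f v)).

Definition is_morphism (k : fieldType) (E : kcat k) (P T : kmod E)
    (pi : forall x, Mod P x -> Mod T x) : Prop :=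
  (forall x (a : k) (v w : Mod P x), pi x (a *: v + w) = a *: pi x v + pi x w) /\
  (forall x y (f : Hom E x y) (v : Mod P x), pi y (act f v) = act f (pi x v)).

Definition is_quotient (k : fieldType) (E : kcat k) (P : kmod E)
    (Q : forall x, Mod P x -> Prop) (T : kmod E)
    (pi : forall x, Mod P x -> Mod T x) : Prop :=
  is_morphism pi /\
  (forall x (t : Mod T x), exists v, pi x v = t) /\
  (forall x (v : Mod P x), pi x v = 0 <-> Q x v).

Definition big (k : fieldType) (E : kcat k) (P : kmod E)
    (Q : forall x, Mod P x -> Prop) : Prop :=
  is_submodule Q /\
  exists (T : kmod E) (pi : forall x, Mod P x -> Mod T x),
    is_quotient Q pi /\ contrafinite T.

Definition subI (k : fieldType) (E : kcat k) (P : kmod E)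
    (Q' Q'' : forall x, Mod P x -> Prop) : forall x, Mod P x -> Prop :=
  fun x v => Q' x v /\ Q'' x v.

(* Main.v *)
Require Import Defs.
From HB Require Import structures.
From mathcomp Require Import all_boot all_order all_algebra.
From mathcomp Require Import boolp.
Set Implicit Arguments. Unset Strict Implicit. Unset Printing Implicit Defensive.
Import GRing.Theory.
Local Open Scope ring_scope.

Definition imgp (k : fieldType) (E : kcat k) (P T1 T2 : kmod E)
  (pi1 : forall x, Mod P x -> Mod T1 x) (pi2 : forall x, Mod P x -> Mod T2 x)
  (H1 : is_morphism pi1) (H2 : is_morphism pi2) (x : Obj E)
  : pred (Mod T1 x * Mod T2 x) :=
  fun t => `[< exists v, (pi1 x v, pi2 x v) = t >].
Arguments imgp {k E P T1 T2 pi1 pi2} H1 H2 x.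

Lemma morph0 (k : fieldType) (E : kcat k) (P T : kmod E)
  (pi : forall x, Mod P x -> Mod T x) : is_morphism pi -> forall x, pi x 0 = 0.
Proof.
move=> [Hl _] x.
have := Hl x 1 0 0; rewrite scale1r addr0 scale1r => /(congr1 (fun z => z - pi x 0)).
by rewrite addrK subrr.
Qed.

Lemma imgp_closed (k : fieldType) (E : kcat k) (P T1 T2 : kmod E)
  (pi1 : forall x, Mod P x -> Mod T1 x) (pi2 : forall x, Mod P x -> Mod T2 x)
  (H1 : is_morphism pi1) (H2 : is_morphism pi2) (x : Obj E) :
  subsemimod_closed (imgp H1 H2 x).
Proof.
split; first split.
- by apply/asboolP; exists 0; rewrite !morph0.
- move=> u w /asboolP [v <-] /asboolP [vv <-]; apply/asboolP.
  exists (1 *: v + vv); case: (H1) => [L1 _]; case: (H2) => [L2 _].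
  by rewrite L1 L2 !scale1r.
- move=> a u /asboolP [v <-]; apply/asboolP.
  exists (a *: v + 0); case: (H1) => [L1 _]; case: (H2) => [L2 _].
  rewrite L1 L2 !morph0 //; congr pair; exact: addr0.
Qed.

Definition imgT (k : fieldType) (E : kcat k) (P T1 T2 : kmod E)
  (pi1 : forall x, Mod P x -> Mod T1 x) (pi2 : forall x, Mod P x -> Mod T2 x)
  (H1 : is_morphism pi1) (H2 : is_morphism pi2) (x : Obj E) :=
  {t | imgp H1 H2 x t}.
Arguments imgT {k E P T1 T2 pi1 pi2} H1 H2 x.

HB.instance Definition _ (k : fieldType) (E : kcat k) (P T1 T2 : kmod E)
  (pi1 : forall x, Mod P x -> Mod T1 x) (pi2 : forall x, Mod P x -> Mod T2 x)
  (H1 : is_morphism pi1) (H2 : is_morphism pi2) (x : Obj E) :=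
  [isSub for (@proj1_sig _ _ : imgT H1 H2 x -> _)].
HB.instance Definition _ (k : fieldType) (E : kcat k) (P T1 T2 : kmod E)
  (pi1 : forall x, Mod P x -> Mod T1 x) (pi2 : forall x, Mod P x -> Mod T2 x)
  (H1 : is_morphism pi1) (H2 : is_morphism pi2) (x : Obj E) :=
  [Choice of imgT H1 H2 x by <:].
HB.instance Definition _ (k : fieldType) (E : kcat k) (P T1 T2 : kmod E)
  (pi1 : forall x, Mod P x -> Mod T1 x) (pi2 : forall x, Mod P x -> Mod T2 x)
  (H1 : is_morphism pi1) (H2 : is_morphism pi2) (x : Obj E) :=
  GRing.SubChoice_isSubLmodule.Build k _ (imgp H1 H2 x) (imgT H1 H2 x) (imgp_closed H1 H2 x).



Lemma imgp_act (k : fieldType) (E : kcat k) (P T1 T2 : kmod E)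
  (pi1 : forall x, Mod P x -> Mod T1 x) (pi2 : forall x, Mod P x -> Mod T2 x)
  (H1 : is_morphism pi1) (H2 : is_morphism pi2) x y (f : Defs.Hom E x y) t :
  imgp H1 H2 x t -> imgp H1 H2 y (act f t.1, act f t.2).
Proof.
move=> /asboolP [v <-]; apply/asboolP; exists (act f v).
by case: H1 => _ ->; case: H2 => _ ->.
Qed.

Definition imgact (k : fieldType) (E : kcat k) (P T1 T2 : kmod E)
  (pi1 : forall x, Mod P x -> Mod T1 x) (pi2 : forall x, Mod P x -> Mod T2 x)
  (H1 : is_morphism pi1) (H2 : is_morphism pi2) x y (f : Defs.Hom E x y)
  (w : imgT H1 H2 x) : imgT H1 H2 y :=
  exist _ (act f (val w).1, act f (val w).2) (imgp_act f (valP w)).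

Lemma valZD (k : fieldType) (E : kcat k) (P T1 T2 : kmod E)
  (pi1 : forall x, Mod P x -> Mod T1 x) (pi2 : forall x, Mod P x -> Mod T2 x)
  (H1 : is_morphism pi1) (H2 : is_morphism pi2) x (a : k) (v w : imgT H1 H2 x) :
  val (a *: v + w) = a *: val v + val w.
Proof. by []. Qed.

Definition imgmod (k : fieldType) (E : kcat k) (P T1 T2 : kmod E)
  (pi1 : forall x, Mod P x -> Mod T1 x) (pi2 : forall x, Mod P x -> Mod T2 x)
  (H1 : is_morphism pi1) (H2 : is_morphism pi2) : kmod E.
Proof.
refine (@KMod k E (fun x => imgT H1 H2 x) (fun x y f w => imgact f w) _ _ _ _).
- by move=> x y f a v w; apply: val_inj => /=; rewrite !act_linr.
- by move=> x y v a f g; apply: val_inj => /=; rewrite !act_linl.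
- by move=> x y z g f v; apply: val_inj; rewrite /= !act_comp.
- by move=> x v; apply: val_inj; rewrite /= !act_id; case: (val v).
Defined.

Lemma imgp_pi (k : fieldType) (E : kcat k) (P T1 T2 : kmod E)
  (pi1 : forall x, Mod P x -> Mod T1 x) (pi2 : forall x, Mod P x -> Mod T2 x)
  (H1 : is_morphism pi1) (H2 : is_morphism pi2) x (v : Mod P x) :
  imgp H1 H2 x (pi1 x v, pi2 x v).
Proof. by apply/asboolP; exists v. Qed.

Definition imgpi (k : fieldType) (E : kcat k) (P T1 T2 : kmod E)
  (pi1 : forall x, Mod P x -> Mod T1 x) (pi2 : forall x, Mod P x -> Mod T2 x)
  (H1 : is_morphism pi1) (H2 : is_morphism pi2) x (v : Mod P x) : imgT H1 H2 x :=
  exist _ (pi1 x v, pi2 x v) (imgp_pi H1 H2 v).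

Lemma inP_catl (T : Type) (z : T) s1 s2 : inP z s1 -> inP z (s1 ++ s2).
Proof. by elim: s1 => //= a s IH [->|/IH]; [left|right]. Qed.
Lemma inP_catr (T : Type) (z : T) s1 s2 : inP z s2 -> inP z (s1 ++ s2).
Proof. by elim: s1 => //= a s IH /IH; right. Qed.

Theorem lemma4p9 (k : fieldType) (E : kcat k) (P : kmod E)
    (Q' Q'' : forall x : Obj E, Mod P x -> Prop) :
  locally_finite E -> big Q' -> big Q'' -> big (subI Q' Q'').
Proof.
move=> _ [[Z1 [L1 A1]] [T1 [pi1 [[Hm1 [Hs1 Hk1]] C1]]]]
  [[Z2 [L2 A2]] [T2 [pi2 [[Hm2 [Hs2 Hk2]] C2]]]].
split.
  split; first by move=> x; split.
  split; first by move=> x a v w [? ?] [? ?]; split; [apply: L1|apply: L2].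
  by move=> x y f v [? ?]; split; [apply: A1|apply: A2].
exists (imgmod Hm1 Hm2), (imgpi Hm1 Hm2).
split; [split; [|split]|].
- case: (Hm1) => [l1 a1]; case: (Hm2) => [l2 a2].
  split.
  + by move=> x a v w; apply: val_inj => /=; rewrite l1 l2.
  + by move=> x y f v; apply: val_inj => /=; rewrite a1 a2.
- move=> x [t Ht]; case/asboolP: (Ht) => v ev; exists v; apply: val_inj => /=. exact: ev.
- move=> x v; split.
  + move/(congr1 val) => /= [e1 e2]; split; [exact/Hk1|exact/Hk2].
  + by move=> [q1 q2]; apply: val_inj => /=; rewrite (proj2 (Hk1 x v) q1) (proj2 (Hk2 x v) q2).
- move=> y; have [B1 HB1] := C1 y; have [B2 HB2] := C2 y.
  exists (B1 ++ B2) => x nx f w; apply: val_inj => /=.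
  rewrite HB1 ?HB2 //.
  + by move=> h; apply: nx; apply: inP_catr.
  + by move=> h; apply: nx; apply: inP_catl.
Qed.
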